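(* The function $h$ is a height function, i.e. it satisfies: (A1) $h(L)=0$ if and only if $L=\emptyset$; (A2) if $h(L)<\infty$ and $L'\subseteq L$ then $h(L')\le h(L)$; (A3) if $h(L)<\infty$ and $L'\subseteq L-1$ then $h(L')\le h(L)$; (A4) if $h(L),h(L')\le s<\infty$, then $h(L'\cap L)\le s-1$ or $h(L'\cap(L-1))\le s-1$; for all finite $L,L'\subseteq\mathbb{N}$ and integers $s$.
   Context: $\mathbb{N}=\{0,1,2,\ldots\}$. For a finite $L\subseteq\mathbb{N}$ and an integer $r$, write $L+r:=\{x+r: x\in L,\ x+r\ge 0\}$. Define $h$ on finite subsets of $\mathbb{N}$ recursively on $|L|$: $h(\emptyset)=0$, and for $L\neq\emptyset$, $$h(L)=1+\max\Big\{h(L\cap(L+1)),\ \max_{M\in T(L)}\min\{h(L\cap M),\,h(L\cap(M-1))\}\Big\},$$ where $T(L)$ is the set of all finite $M\subseteq\mathbb{N}$ with $M\notin\{L,L+1\}$ and $0<|M|\le|L|$. *)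

(* Defs.v *)
From Stdlib Require Import ClassicalEpsilon.
From mathcomp Require Import all_boot.

Set Implicit Arguments.
Unset Strict Implicit.
Unset Printing Implicit Defensive.

(* Finite subsets of N, canonically represented by strictly increasing
   sequences; thus Leibniz equality of [nset] is equality of sets. *)
Definition nset := {s : seq nat | sorted ltn s}.

Definition elems (A : nset) : seq nat := proj1_sig A.

Lemma mk_sorted (s : seq nat) : sorted ltn (sort leq (undup s)).
Proof.
rewrite ltn_sorted_uniq_leq sort_uniq undup_uniq /=.
apply: sort_sorted; exact: leq_total.
Qed.

Definition mk (s : seq nat) : nset := exist _ (sort leq (undup s)) (mk_sorted s).

Definition nmem (x : nat) (A : nset) : bool := x \in elems A.
Definition nsubset (A B : nset) : Prop := forall x, nmem x A -> nmem x B.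
Definition ncard (A : nset) : nat := size (elems A).
Definition nempty : nset := mk [::].

Definition ninter (A B : nset) : nset := mk [seq x <- elems A | x \in elems B].
Definition nshift1 (A : nset) : nset := mk [seq x.+1 | x <- elems A].
Definition nshiftm1 (A : nset) : nset :=
  mk [seq x.-1 | x <- elems A & 0 < x].

(* supremum (least upper bound) of a set of naturals; used only for
   nonempty bounded sets, where it is the maximum *)
Definition natsup (P : nat -> Prop) : nat :=
  epsilon (inhabits 0%N)
    (fun n => (forall m, P m -> m <= n) /\
              (forall k, (forall m, P m -> m <= k) -> n <= k)).

Definition inT (L M : nset) : Prop :=
  M <> L /\ M <> nshift1 L /\ 0 < ncard M /\ ncard M <= ncard L.

(* h with fuel; the recursive calls are on strictly smaller sets,
   so fuel |L| suffices. *)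
Fixpoint hfuel (n : nat) (L : nset) : nat :=
  match n with
  | 0 => 0
  | k.+1 =>
      if elems L == [::] then 0 else
      (maxn (hfuel k (ninter L (nshift1 L)))
            (natsup (fun v => exists M, inT L M /\
                 v = minn (hfuel k (ninter L M)) (hfuel k (ninter L (nshiftm1 M)))))).+1
  end.

Definition h (L : nset) : nat := hfuel (ncard L) L.

(* Main.v *)
Require Import Defs.
From Stdlib Require Import ClassicalEpsilon Classical FunctionalExtensionality PropExtensionality.
From mathcomp Require Import all_boot zify.
Set Implicit Arguments. Unset Strict Implicit. Unset Printing Implicit Defensive.

Lemma elems_uniq A : uniq (elems A).
Proof. case: A => s /= Hs; exact: (sorted_uniq ltn_trans ltnn). Qed.

Lemma nset_ext A B : (forall x, nmem x A = nmem x B) -> A = B.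
Proof.
case: A => s Hs; case: B => t Ht /= E.
have st : s = t.
  apply: (irr_sorted_eq ltn_trans ltnn Hs Ht) => x; exact: E.
subst t; congr exist; exact: bool_irrelevance.
Qed.

Lemma nmem_mk x s : nmem x (mk s) = (x \in s).
Proof. by rewrite /nmem /= mem_sort mem_undup. Qed.

Lemma nmem_inter x A B : nmem x (ninter A B) = nmem x A && nmem x B.
Proof. by rewrite /ninter nmem_mk mem_filter andbC. Qed.

Lemma nmem_sh1 x A : nmem x (nshift1 A) = (0 < x) && nmem x.-1 A.
Proof.
rewrite /nshift1 nmem_mk; case: x => [|y] /=.
  by apply/mapP => -[z _].
by rewrite (mem_map succn_inj).
Qed.

Lemma nmem_shm1 x A : nmem x (nshiftm1 A) = nmem x.+1 A.
Proof.
rewrite /nshiftm1 nmem_mk /nmem; apply/mapP/idP.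
  by case=> y; rewrite mem_filter => /andP [y0 yA] ->; rewrite prednK.
by move=> H; exists x.+1 => //; rewrite mem_filter H.
Qed.

Lemma nmem_empty x : nmem x nempty = false.
Proof. by []. Qed.

Lemma ncard_sub A B : nsubset A B -> ncard A <= ncard B.
Proof. move=> H; apply: uniq_leq_size; [exact: elems_uniq | move=> x; exact: H]. Qed.

Lemma nset_eq_sub A B : nsubset A B -> ncard B <= ncard A -> A = B.
Proof.
move=> H le; have [_ E] := uniq_min_size (elems_uniq A) (fun x => H x) le.
apply: nset_ext => x; exact: E.
Qed.

Lemma ncard_sh1 A : ncard (nshift1 A) = ncard A.
Proof.
rewrite /ncard /nshift1 /= size_sort undup_id ?size_map //.
rewrite (map_inj_uniq succn_inj); exact: elems_uniq.
Qed.

Lemma inter_subl A B : nsubset (ninter A B) A.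
Proof. by move=> x; rewrite nmem_inter => /andP []. Qed.

Lemma ncard_inter_le A B : ncard (ninter A B) <= ncard A.
Proof. exact/ncard_sub/inter_subl. Qed.

Lemma ncard_inter_lt A B : ~ nsubset A B -> ncard (ninter A B) < ncard A.
Proof.
move=> H; rewrite ltnNge; apply/negP => le.
have E := nset_eq_sub (@inter_subl A B) le.
apply: H => x hx; have : nmem x (ninter A B) by rewrite E.
by rewrite nmem_inter => /andP [].
Qed.

Lemma inter_comm A B : ninter A B = ninter B A.
Proof. by apply: nset_ext => x; rewrite !nmem_inter andbC. Qed.

Lemma sh1_inter A B : nshift1 (ninter A B) = ninter (nshift1 A) (nshift1 B).
Proof. apply: nset_ext => x; rewrite !nmem_inter !nmem_sh1 nmem_inter; by case: (0 < x). Qed.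

Lemma shm1_sh1 A : nshiftm1 (nshift1 A) = A.
Proof. by apply: nset_ext => x; rewrite nmem_shm1 nmem_sh1. Qed.

Lemma sh1_G A B : nshift1 (ninter A (nshiftm1 B)) = ninter (nshift1 A) B.
Proof.
apply: nset_ext => x; rewrite !nmem_inter !nmem_sh1 nmem_inter nmem_shm1.
by case: x.
Qed.

Lemma sh1_inj A B : nshift1 A = nshift1 B -> A = B.
Proof. by move=> E; rewrite -(shm1_sh1 A) E shm1_sh1. Qed.

Lemma empty_of A : (forall x, nmem x A = false) -> A = nempty.
Proof. by move=> H; apply: nset_ext => x; rewrite H. Qed.

Lemma elems_nil A : elems A = [::] -> A = nempty.
Proof. by move=> E; apply: empty_of => x; rewrite /nmem E. Qed.

Lemma ncard0 A : ncard A = 0 -> A = nempty.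
Proof. by move=> /size0nil; exact: elems_nil. Qed.

Lemma nsub_sh1 L : nsubset L (nshift1 L) -> L = nempty.
Proof.
move=> H; apply: empty_of; elim=> [|x IH].
  by apply/negP => /H; rewrite nmem_sh1.
by apply/negP => /H; rewrite nmem_sh1 /= IH.
Qed.

Lemma nonempty_card L : L <> nempty -> 0 < ncard L.
Proof. by move=> H; rewrite lt0n; apply/negP => /eqP /ncard0. Qed.

Lemma inT_notsub L M : inT L M -> ~ nsubset L M /\ ~ nsubset L (nshiftm1 M).
Proof.
case=> [nML [nMS [_ le]]]; split => H.
  by apply: nML; symmetry; apply: nset_eq_sub.
have H1 : nsubset (nshift1 L) M.
  move=> x; rewrite nmem_sh1 => /andP [x0 /H]; rewrite nmem_shm1 prednK //.
by apply: nMS; symmetry; apply: nset_eq_sub => //; rewrite ncard_sh1.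
Qed.

Lemma natsup_spec (P : nat -> Prop) B : (forall m, P m -> m <= B) ->
  (forall m, P m -> m <= natsup P) /\
  (forall k, (forall m, P m -> m <= k) -> natsup P <= k).
Proof.
move=> HB; rewrite /natsup.
set Q := (fun n => (forall m, P m -> m <= n) /\
              (forall k, (forall m, P m -> m <= k) -> n <= k)).
change (Q (epsilon (inhabits 0) Q)); apply: epsilon_spec; rewrite /Q.
elim: B HB => [|B IH] HB.
  exists 0; split => // k _; done.
case: (classic (P B.+1)) => PB.
  exists B.+1; split => // k Hk; exact: Hk.
apply: IH => m Pm; have := HB m Pm; rewrite leq_eqVlt => /orP [/eqP E|//].
by subst m.
Qed.

Lemma hfuel_le n L : hfuel n L <= n.
Proof.
elim: n L => [|k IH] L //=; case: ifP => // _; rewrite ltnS geq_max IH /=.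
set P := (fun v => exists M, inT L M /\
    v = minn (hfuel k (ninter L M)) (hfuel k (ninter L (nshiftm1 M)))).
have [|_ S] := @natsup_spec P k.
  by move=> m [M [_ ->]]; rewrite geq_min IH.
apply: S => m [M [_ ->]]; by rewrite geq_min IH.
Qed.

Lemma hfuel_fuel n m L : ncard L <= n -> ncard L <= m -> hfuel n L = hfuel m L.
Proof.
elim: n m L => [|k IH] m L.
  rewrite leqn0 => /eqP /size0nil E _; by case: m => //= m; rewrite E.
case: m => [|j].
  move=> _; rewrite leqn0 => /eqP /size0nil E; by rewrite /= E.
move=> Hk Hj /=; case: ifP => // /eqP ne.
have neL : L <> nempty by move=> E; apply: ne; rewrite E.
have lt1 : ncard (ninter L (nshift1 L)) < ncard L.
  by apply: ncard_inter_lt => /nsub_sh1.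
rewrite (IH j); [|lia|lia].
congr (maxn _ _).+1; congr natsup; apply: functional_extensionality => v.
apply: propositional_extensionality; split => -[M [HM ->]]; exists M; split => //;
  have [n1 n2] := inT_notsub HM;
  have l1 := ncard_inter_lt n1; have l2 := ncard_inter_lt n2.
  by rewrite (IH j) 1?(IH j (ninter L (nshiftm1 M))) //; lia.
by rewrite (IH j) 1?(IH j (ninter L (nshiftm1 M))) //; lia.
Qed.

Lemma hfuel_h n L : ncard L <= n -> hfuel n L = h L.
Proof. move=> H; exact: hfuel_fuel. Qed.

Definition PL L := fun v => exists M, inT L M /\
    v = minn (h (ninter L M)) (h (ninter L (nshiftm1 M))).

Lemma h_unfold L : L <> nempty ->
  h L = (maxn (h (ninter L (nshift1 L))) (natsup (PL L))).+1.
Proof.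
move=> ne; have := nonempty_card ne; rewrite /h.
case E: (ncard L) => [|k] // _ /=.
have -> : (elems L == [::]) = false.
  by apply/negP => /eqP /elems_nil.
have lt1 : ncard (ninter L (nshift1 L)) < ncard L.
  by apply: ncard_inter_lt => /nsub_sh1.
rewrite hfuel_h; last lia.
congr (maxn _ _).+1; congr natsup; apply: functional_extensionality => v.
apply: propositional_extensionality; split => -[M [HM ->]]; exists M; split => //;
  have [n1 n2] := inT_notsub HM;
  have l1 := ncard_inter_lt n1; have l2 := ncard_inter_lt n2.
  by rewrite !hfuel_h //; lia.
by rewrite -!(@hfuel_h k) //; lia.
Qed.

Lemma h_bound A : h A <= ncard A.
Proof. exact: hfuel_le. Qed.

Lemma PL_spec L :
  (forall m, PL L m -> m <= natsup (PL L)) /\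
  (forall k, (forall m, PL L m -> m <= k) -> natsup (PL L) <= k).
Proof.
apply: (@natsup_spec (PL L) (ncard L)) => m [M [_ ->]].
rewrite geq_min; apply/orP; left; apply: leq_trans (h_bound _) _.
exact: ncard_inter_le.
Qed.

Lemma hT L M : inT L M -> minn (h (ninter L M)) (h (ninter L (nshiftm1 M))) < h L.
Proof.
move=> HM; have ne : L <> nempty.
  by move=> E; case: HM => _ [_ [c1 c2]]; move: c2; rewrite E; case: (ncard M) c1.
rewrite (h_unfold ne) ltnS leq_max; apply/orP; right.
case: (PL_spec L) => U _; apply: U; by exists M.
Qed.

Lemma hS L : L <> nempty -> h (ninter L (nshift1 L)) < h L.
Proof. by move=> ne; rewrite (h_unfold ne) ltnS leq_max leqnn. Qed.

Lemma hle L b : L <> nempty -> h (ninter L (nshift1 L)) <= b ->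
  (forall M, inT L M -> minn (h (ninter L M)) (h (ninter L (nshiftm1 M))) <= b) ->
  h L <= b.+1.
Proof.
move=> ne H1 H2; rewrite (h_unfold ne) ltnS geq_max H1 /=.
case: (PL_spec L) => _ S; apply: S => m [M [HM ->]]; exact: H2.
Qed.

Lemma h_empty : h nempty = 0.
Proof. by []. Qed.

Lemma not_sub_sh1 L : L <> nempty -> ~ nsubset L (nshift1 L).
Proof. by move=> ne /nsub_sh1. Qed.

Lemma A2 L L' : nsubset L' L -> h L' <= h L.
Proof.
move: {2}(ncard L) (leqnn (ncard L)) => n; elim: n L L' => [|n IH] L L' Hn Hs.
  move: Hn; rewrite leqn0 => /eqP /ncard0 E; subst L.
  have -> : L' = nempty by apply: empty_of => x; apply/negP => /Hs.
  done.
case: (classic (L' = nempty)) => [->|ne']; first by rewrite h_empty.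
case: (classic (L' = L)) => [->|neq]; first done.
have ne : L <> nempty.
  move=> E; apply: ne'; apply: empty_of => x; apply/negP => /Hs; by rewrite E.
have hLpos := hS ne.
have lt1 : ncard (ninter L (nshift1 L)) < ncard L by apply: ncard_inter_lt; exact: not_sub_sh1.
have -> : h L = (h L).-1.+1 by lia.
apply: hle => //.
  have : h (ninter L' (nshift1 L')) <= h (ninter L (nshift1 L)).
    apply: IH; first lia.
    move=> x; rewrite !nmem_inter !nmem_sh1 => /andP [/Hs -> /andP [-> /Hs ->]] //.
  lia.
move=> M HM.
have HML : inT L M.
  case: HM => [a [b [c d]]]; have cl := ncard_sub Hs.
  split; [|split; [|split; [done|lia]]].
    by move=> E; subst M; apply: a; symmetry; apply: nset_eq_sub Hs d.
  move=> E; subst M; apply: neq; apply: nset_eq_sub => //; move: d; rewrite ncard_sh1; lia.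
have := hT HML; have [n1 n2] := inT_notsub HML.
have l1 := ncard_inter_lt n1; have l2 := ncard_inter_lt n2.
have e1 : h (ninter L' M) <= h (ninter L M).
  apply: IH; first lia.
  by move=> x; rewrite !nmem_inter => /andP [/Hs -> ->].
have e2 : h (ninter L' (nshiftm1 M)) <= h (ninter L (nshiftm1 M)).
  apply: IH; first lia.
  by move=> x; rewrite !nmem_inter => /andP [/Hs -> ->].
lia.
Qed.

Lemma hsh L : h L <= h (nshift1 L).
Proof.
move: {2}(ncard L) (leqnn (ncard L)) => n; elim: n L => [|n IH] L Hn.
  by move: Hn; rewrite leqn0 => /eqP /ncard0 ->; rewrite h_empty.
case: (classic (L = nempty)) => [->|ne]; first by rewrite h_empty.
have ne1 : nshift1 L <> nempty.
  move=> E; apply: ne; apply: empty_of => x; apply/negP => Hx.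
  have : nmem x.+1 (nshift1 L) by rewrite nmem_sh1.
  by rewrite E.
have hpos := hS ne1.
have lt1 : ncard (ninter L (nshift1 L)) < ncard L by apply: ncard_inter_lt; exact: not_sub_sh1.
have -> : h (nshift1 L) = (h (nshift1 L)).-1.+1 by lia.
apply: hle => //.
  have := IH (ninter L (nshift1 L)) ltac:(lia); rewrite sh1_inter; lia.
move=> M HM.
have HM1 : inT (nshift1 L) (nshift1 M).
  case: HM => [a [b [c d]]]; split; [|split; [|split]].
  - by move/sh1_inj.
  - by move/sh1_inj.
  - by rewrite ncard_sh1.
  - by rewrite !ncard_sh1.
have := hT HM1; have [n1 n2] := inT_notsub HM.
have l1 := ncard_inter_lt n1; have l2 := ncard_inter_lt n2.
have := IH (ninter L M) ltac:(lia); have := IH (ninter L (nshiftm1 M)) ltac:(lia).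
rewrite sh1_G sh1_inter shm1_sh1; lia.
Qed.

Theorem proposition13 :
  (* (A1) *)
  (forall L : nset, h L = 0 <-> L = nempty) /\
  (* (A2) (h is nat-valued, so h(L) < ∞ always holds) *)
  (forall L L' : nset, nsubset L' L -> h L' <= h L) /\
  (* (A3) *)
  (forall L L' : nset, nsubset L' (nshiftm1 L) -> h L' <= h L) /\
  (* (A4) *)
  (forall (L L' : nset) (s : nat), 0 < s -> h L <= s -> h L' <= s ->
     h (ninter L' L) <= s - 1 \/ h (ninter L' (nshiftm1 L)) <= s - 1).
Proof.
split; [|split; [|split]].
- move=> L; split; last by move=> ->.
  move=> H0; apply: NNPP => ne; have := hS ne; lia.
- move=> L L'; exact: A2.
- move=> L L' Hs; apply: leq_trans (hsh L') (A2 _).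
  move=> x; rewrite nmem_sh1 => /andP [x0 /Hs]; by rewrite nmem_shm1 prednK.
move=> L L' s s0 hL hL'.
case: (classic (L = nempty)) => [E|ne].
  left; have -> : ninter L' L = nempty.
    by apply: empty_of => x; rewrite nmem_inter E andbF.
  by rewrite h_empty.
case: (classic (L' = nempty)) => [E|ne'].
  left; have -> : ninter L' L = nempty.
    by apply: empty_of => x; rewrite nmem_inter E.
  by rewrite h_empty.
case: (classic (L' = L)) => [E|neq].
  subst L'; right; have := hsh (ninter L (nshiftm1 L)); rewrite sh1_G (inter_comm (nshift1 L)).
  have := hS ne; lia.
case: (classic (L = nshift1 L')) => [E|neq2].
  subst L; left; have := hS ne'; lia.
case: (leqP (ncard L') (ncard L)) => cle.
  have HM : inT L (nshift1 L').
    split; [|split; [|split]].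
    - by move=> E; apply: neq2.
    - by move/sh1_inj.
    - by rewrite ncard_sh1; exact: nonempty_card.
    - by rewrite ncard_sh1.
  have := hT HM; rewrite shm1_sh1.
  have := hsh (ninter L' (nshiftm1 L)); rewrite sh1_G (inter_comm (nshift1 L')).
  rewrite (inter_comm L' L); lia.
have HM : inT L' L.
  split; [|split; [|split]].
  - by move=> E; apply: neq.
  - done.
  - exact: nonempty_card.
  - lia.
have := hT HM; lia.
Qed.
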